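(* For every finite item set $M$ and every additive valuation $v$ on $M$ with nonnegative item values, $\mathrm{RMMS}(M,v,2)=\mathrm{MMS}(M,v,2)$.
   Context: A valuation $v:2^M\to\mathbb{R}_{\ge0}$ is additive if $v(S)=\sum_{e\in S}v(\{e\})$ for all $S\subseteq M$. $\mathrm{MMS}(M,v,n)$ is the maximum, over all partitions $P_1,\dots,P_n$ of $M$ into $n$ (possibly empty) parts, of $\min_j v(P_j)$. Residual maximin share: $\mathrm{RMMS}(M,v,n)$ is the largest real $t$ with the following property: for every $0\le k<n$ and every $k$ pairwise disjoint bundles $B_1,\dots,B_k\subseteq M$ with $v(B_j)<t$ for all $j$, the set $M\setminus(B_1\cup\dots\cup B_k)$ can be partitioned into $n-k$ bundles each of value (under $v$) at least $t$. *)

(* Defs.v *)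
From mathcomp Require Import all_boot all_order all_algebra.
Set Implicit Arguments. Unset Strict Implicit. Unset Printing Implicit Defensive.
Import Order.TTheory GRing.Theory Num.Theory.
Local Open Scope ring_scope.

Definition bval {R : realFieldType} {M : finType} (v : M -> R) (S : {set M}) : R :=
  \sum_(e in S) v e.

(* Partitions of M into n (possibly empty) parts are encoded as maps
   p : {ffun M -> 'I_n}; part j is [set e | p e == j]. *)
Definition part {M : finType} {n : nat} (p : {ffun M -> 'I_n}) (j : 'I_n) : {set M} :=
  [set e | p e == j].

(* min_j v(P_j) for a partition into k.+1 parts (idx = value of part 0,
   which is one of the minimised values, so the big min is the true min). *)
Definition min_bundle {R : realFieldType} {M : finType} {k : nat} (v : M -> R)
    (p : {ffun M -> 'I_k.+1}) : R :=
  \big[Num.min/bval v (part p ord0)]_(j < k.+1) bval v (part p j).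

(* MMS(M,v,n): maximum over all partitions into n parts of the minimal value.
   (n = 0 is meaningless; set to 0.)  idx = value of the trivial partition,
   which is one of the maximised values. *)
Definition MMS {R : realFieldType} {M : finType} (v : M -> R) (n : nat) : R :=
  match n with
  | 0 => 0
  | k.+1 =>
      \big[Num.max/min_bundle v ([ffun _ => ord0] : {ffun M -> 'I_k.+1})]_(p : {ffun M -> 'I_k.+1})
        min_bundle v p
  end.

Definition RMMS_prop {R : realFieldType} {M : finType} (v : M -> R) (n : nat) (t : R) : Prop :=
  forall (k : nat), (k < n)%N ->
  forall B : 'I_k -> {set M},
    (forall i j, i != j -> [disjoint B i & B j]) ->
    (forall i, bval v (B i) < t) ->
    exists C : 'I_(n - k) -> {set M},
      [/\ (forall i j, i != j -> [disjoint C i & C j]),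
          \bigcup_(j < n - k) C j = ~: (\bigcup_(i < k) B i)
        & forall j, t <= bval v (C j)].

Definition is_RMMS {R : realFieldType} {M : finType} (v : M -> R) (n : nat) (x : R) : Prop :=
  RMMS_prop v n x /\ (forall t, RMMS_prop v n t -> t <= x).

(* Main.v *)
Require Import Defs.
From mathcomp Require Import all_boot all_order all_algebra.
Import Order.TTheory GRing.Theory Num.Theory.
Local Open Scope ring_scope.

Section S.
Variables (R : realFieldType) (M : finType) (v : M -> R).
Hypothesis v0 : forall e, 0 <= v e.

Lemma bvalC (A : {set M}) : bval v A + bval v (~: A) = bval v setT.
Proof.
rewrite /bval [in RHS](big_setID A) /= setTI setTD //.
Qed.

Lemma bval_sub (A B : {set M}) : A \subset B -> bval v A <= bval v B.
Proof.
move=> sAB; rewrite /bval [in X in _ <= X](big_setID A) /=.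
rewrite (setIidPr sAB) lerDl; apply: sumr_ge0 => i _; exact: v0.
Qed.

Lemma bigmax_ub (I : eqType) (r : seq I) (F : I -> R) x0 i :
  i \in r -> F i <= \big[Num.max/x0]_(j <- r) F j.
Proof.
elim: r => // a r IH; rewrite inE big_cons le_max => /orP [/eqP -> | /IH ->].
  by rewrite lexx.
by rewrite orbT.
Qed.

Lemma mms_ub (p : {ffun M -> 'I_2}) : min_bundle v p <= MMS v 2.
Proof. by rewrite /MMS; apply: bigmax_ub; rewrite mem_index_enum. Qed.

Lemma mms_ex : exists p : {ffun M -> 'I_2}, MMS v 2 = min_bundle v p.
Proof.
rewrite /MMS; apply: (big_ind (fun y => exists p : {ffun M -> 'I_2}, y = min_bundle v p)).
- by eexists.
- move=> x y [p ->] [q ->]; case: (leP (min_bundle v p) (min_bundle v q)) => _.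
  + by exists q. + by exists p.
- by move=> p _; exists p.
Qed.

Lemma mb2 (p : {ffun M -> 'I_2}) :
  min_bundle v p = Num.min (bval v (part p ord0)) (bval v (part p ord_max)).
Proof.
rewrite /min_bundle big_ord_recl big_ord_recl big_ord0 /=.
have -> : lift ord0 (ord0 : 'I_1) = ord_max :> 'I_2 by apply/val_inj.
by rewrite [X in Num.min _ X]minC minA minxx.
Qed.

Lemma part1 (p : {ffun M -> 'I_2}) : part p ord_max = ~: part p ord0.
Proof.
apply/setP => e; rewrite !inE; case: (p e) => [[|[|k]]] // H.
Qed.

Lemma two_mms : MMS v 2 + MMS v 2 <= bval v setT.
Proof.
have [p ->] := mms_ex; rewrite -(bvalC (part p ord0)) -part1 mb2.
by apply: lerD; [rewrite ge_min lexx | rewrite ge_min lexx orbT].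
Qed.

End S.

Theorem mainTheorem10 (R : realFieldType) (M : finType) (v : M -> R) :
  (forall e, 0 <= v e) -> is_RMMS v 2 (MMS v 2).
Proof.
move=> v0; split.
- case=> [|[|k]] // _ B _ HB.
  + have [p Hp] := @mms_ex _ _ v.
    exists (part p); split.
    * move=> i j ij; rewrite -setI_eq0; apply/eqP/setP => e; rewrite !inE.
      by apply/negP => /andP [/eqP -> /eqP E]; move: ij; rewrite E eqxx.
    * apply/setP => e; rewrite big_ord0 setC0 inE; apply/bigcupP.
      by exists (p e) => //; rewrite inE.
    * move=> j; rewrite Hp mb2; case: j => [[|[|j]]] // Hj.
      - have -> : Ordinal Hj = ord0 by apply/val_inj.
        by rewrite ge_min lexx.
      - have -> : Ordinal Hj = ord_max by apply/val_inj.
        by rewrite ge_min lexx orbT.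
  + exists (fun _ => ~: B ord0); split.
    * by move=> i j; rewrite !ord1 eqxx.
    * by rewrite !big_ord1.
    * move=> _; have := HB ord0; have := @two_mms _ _ v.
      rewrite -(@bvalC _ _ v (B ord0)) => H1 H2.
      rewrite leNgt; apply/negP => H4.
      by have := ltrD H2 H4; rewrite ltNge H1.
- move=> t Ht.
  have H0 : forall i j : 'I_0, i != j -> [disjoint (set0 : {set M}) & set0] by case.
  have H1 : forall i : 'I_0, bval v set0 < t by case.
  have [C [Cd CU Ct]] := Ht 0%N isT (fun i : 'I_0 => set0) H0 H1.
  pose p : {ffun M -> 'I_2} := [ffun e => if e \in C ord0 then ord0 else ord_max].
  have P0 : part p ord0 = C ord0.
    by apply/setP => e; rewrite !inE ffunE; case: (e \in C ord0).
  apply: (le_trans _ (@mms_ub _ _ v p)); rewrite mb2 le_min P0 Ct /=.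
  rewrite part1 P0; apply: (le_trans (Ct ord_max)); apply: (@bval_sub _ _ v v0).
  apply/subsetP => e He; rewrite inE; apply/negP => He0.
  have : ord0 != ord_max :> 'I_2 by [].
  by move/(Cd _ _)/disjointFr/(_ He0); rewrite He.
Qed.
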